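(* Let $M\ge 0$, $k\ge 1$ and $m\ge 0$ be integers. Let $\mathcal{P}_M(k,m)$ be the set of partitions $\pi=(\lambda_1,\dots,\lambda_M)$ into exactly $M$ parts with smallest part $\lambda_M\ge k$ and $\lambda_i-\lambda_{i+1}\ge m$ for $1\le i\le M-1$ (for $M=0$, $\mathcal{P}_0(k,m)$ consists only of the empty partition). For $\pi\in\mathcal{P}_M(k,m)$ define \[\omega_{k,m}(\pi):=(\lambda_M+1-k)\prod_{i=1}^{M-1}(\lambda_i-\lambda_{i+1}+1-m),\] with $\omega_{k,m}$ of the empty partition equal to $1$. Then \[\sum_{\pi\in\mathcal{P}_M(k,m)}\omega_{k,m}(\pi)\,q^{|\pi|}=\frac{q^{m\binom{M}{2}+kM}}{(q;q)_M^2}.\]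
   Context: A partition is a finite weakly decreasing sequence of positive integers; $|\pi|$ is the sum of its parts. $(a;q)_L=\prod_{n=0}^{L-1}(1-aq^n)$. *)

(* Defs.v *)
From mathcomp Require Import all_boot all_order all_algebra.
Set Implicit Arguments. Unset Strict Implicit. Unset Printing Implicit Defensive.
Import GRing.Theory.
Local Open Scope ring_scope.

(* A partition into exactly M parts is encoded as the sequence
   [:: lambda_1; ...; lambda_M] of its parts (largest first). *)

Definition inP (M k m : nat) (s : seq nat) : bool :=
  [&& size s == M,
      [forall i : 'I_M.-1, nth 0%N s i.+1 + m <= nth 0%N s i]%N &
      (if s is x :: t then k <= last x t else true)%N].

Definition omega (k m : nat) (s : seq nat) : nat :=
  match s with
  | [::] => 1%N
  | x :: t => ((last x t + 1 - k) *
               \prod_(i < size t) (nth 0%N s i - nth 0%N s i.+1 + 1 - m))%N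
  end.

Definition psize (s : seq nat) : nat := sumn s.

(* coefficient of q^n in sum_{pi in P_M(k,m)} omega(pi) q^|pi| ;
   every part of a partition of n is <= n, so parts range over 'I_n.+1 *)
Definition Pcoef (M k m n : nat) : int :=
  (\sum_(f : {ffun 'I_M -> 'I_n.+1}
         | inP M k m [seq nat_of_ord (f i) | i <- enum 'I_M]
           && (psize [seq nat_of_ord (f i) | i <- enum 'I_M] == n))
     (omega k m [seq nat_of_ord (f i) | i <- enum 'I_M])%:R).

Definition Pgen_trunc (M k m N : nat) : {poly int} :=
  \sum_(n < N) Pcoef M k m n *: 'X^n.

Definition qpoch (M : nat) : {poly int} := \prod_(j < M) (1 - 'X^(j.+1)).

(* Main.v *)
Require Import Defs.
From mathcomp Require Import all_boot all_order all_algebra.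
From mathcomp Require Import zify ring lra.
Set Implicit Arguments. Unset Strict Implicit. Unset Printing Implicit Defensive.
Import GRing.Theory.
Local Open Scope ring_scope.

Fixpoint tsum (M B : nat) (G : seq nat -> int) : int :=
  match M with 0 => G [::] | M'.+1 => tsum M' B (fun s => \sum_(x < B) G (rcons s x)) end.

Lemma tsum_ext M B G G' : (forall s, G s = G' s) -> tsum M B G = tsum M B G'.
Proof.
elim: M G G' => [|M IH] G G' H /=; first exact: H.
apply: IH => s; apply: eq_bigr => x _; exact: H.
Qed.

Lemma sum_ffun_tsum M B (G : seq nat -> int) :
  \sum_(f : {ffun 'I_M -> 'I_B}) G [seq nat_of_ord (f i) | i <- enum 'I_M] = tsum M B G.
Proof.
elim: M G => [|M IH] G /=.
  rewrite enum_ord0 /= sumr_const card_ffun !card_ord expn0 //.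
rewrite -IH.
pose h (p : {ffun 'I_M -> 'I_B} * 'I_B) : {ffun 'I_M.+1 -> 'I_B} :=
  [ffun i => if unlift ord_max i is Some j then p.1 j else p.2].
pose h' (f : {ffun 'I_M.+1 -> 'I_B}) := ([ffun j => f (lift ord_max j)], f ord_max).
have hK : cancel h h'.
  case=> g x; rewrite /h /h' /=; congr (_, _); last by rewrite ffunE unlift_none.
  by apply/ffunP => j; rewrite !ffunE liftK.
have hK' : cancel h' h.
  move=> f; apply/ffunP => i; rewrite /h /h' ffunE /=.
  by case: unliftP => [j ->|->]; rewrite ?ffunE.
rewrite (reindex h); last by apply: onW_bij; exists h'.
rewrite -(pair_big xpredT xpredT (fun g x => G [seq nat_of_ord (h (g, x) i) | i <- enum 'I_M.+1])) /=.
apply: eq_bigr => g _; apply: eq_bigr => x _; congr G.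
rewrite enum_ordSr map_rcons -map_comp /h ffunE unlift_none; congr rcons.
apply: eq_map => j /=; rewrite ffunE.
have -> : widen_ord (leqnSn M) j = lift ord_max j by apply: val_inj; rewrite /= /bump leqNgt ltn_ord.
by rewrite liftK.
Qed.

Lemma tsum_sum M B K (H : nat -> seq nat -> int) :
  tsum M B (fun s => \sum_(x < K) H x s) = \sum_(x < K) tsum M B (H x).
Proof.
elim: M H => [|M IH] H //=.
rewrite -(IH (fun x s => \sum_(y < B) H x (rcons s y))); apply: tsum_ext => s; exact: exchange_big.
Qed.

Lemma tsum_scale M B c G : tsum M B (fun s => c * G s) = c * tsum M B G.
Proof.
elim: M G => [|M IH] G //=.
rewrite -IH; apply: tsum_ext => s; by rewrite mulr_sumr.
Qed.

Lemma psize_rcons s x : psize (rcons s x) = (psize s + x)%N.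
Proof. by rewrite /psize -cats1 sumn_cat /= addn0. Qed.

Lemma sum_trunc B n (F : nat -> int) : (n < B)%N -> (forall x, (n < x)%N -> F x = 0) ->
  \sum_(x < B) F x = \sum_(x < n.+1) F x.
Proof.
move=> hB hF; rewrite (big_ord_widen B F hB) [in RHS]big_mkcond /=.
apply: eq_bigr => i _; case: ifP => // /negbT; rewrite -leqNgt => h; by rewrite hF.
Qed.

Lemma tsum_bound M B B' n G : (n < B)%N -> (n < B')%N ->
  (forall s, (n < psize s)%N -> G s = 0) -> tsum M B G = tsum M B' G.
Proof.
move=> hB hB'; elim: M G => [|M IH] G hG //=.
rewrite (@tsum_ext M B _ (fun s => \sum_(x < n.+1) G (rcons s x))); last first.
  move=> s; apply: (@sum_trunc _ n (fun x => G (rcons s x))) => // x hx; apply: hG; rewrite psize_rcons; exact: ltn_addl.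
rewrite (@tsum_ext M B' _ (fun s => \sum_(x < n.+1) G (rcons s x))); last first.
  move=> s; apply: (@sum_trunc _ n (fun x => G (rcons s x))) => // x hx; apply: hG; rewrite psize_rcons; exact: ltn_addl.
apply: IH => s hs; apply: big1 => x _; apply: hG; rewrite psize_rcons; exact: ltn_addr.
Qed.
Definition Rg (m : nat) : rel nat := fun a b => (b + m <= a)%N.

Lemma inPE M k m s : inP M k m s =
  (size s == M) && (if s is y :: t then path (Rg m) y t && (k <= last y t)%N else true).
Proof.
rewrite /inP; case: eqP => [<-|] //=; case: s => [|y t] /=.
  by rewrite andbT; apply/forallP => -[].
congr andb; apply/forallP/(pathP 0%N) => H.
  move=> i hi; exact: (H (Ordinal hi)).
by move=> i; apply: H.
Qed.

Fixpoint gp (m : nat) (y : nat) (t : seq nat) : nat :=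
  if t is z :: t' then ((y - z + 1 - m) * gp m z t')%N else 1%N.

Lemma omegaE k m y t : omega k m (y :: t) = ((last y t + 1 - k) * gp m y t)%N.
Proof.
rewrite /omega; congr muln.
elim: t y => [|z t IH] y /=; first by rewrite big_ord0.
rewrite big_ord_recl /=; congr muln; exact: IH.
Qed.

Lemma gp_rcons m y t x : gp m y (rcons t x) = (gp m y t * (last y t - x + 1 - m))%N.
Proof.
elim: t y => [|z t IH] y /=; first by rewrite mul1n muln1.
by rewrite IH mulnA.
Qed.

Lemma inP_rcons M k m s x :
  inP M.+1 k m (rcons s x) = (k <= x)%N && inP M (x + m) m s.
Proof.
rewrite !inPE size_rcons eqSS.
case: s => [|y t] /=; first by rewrite andbT andbC.
rewrite rcons_path last_rcons /Rg.
by case: (k <= x)%N; rewrite ?andbT ?andbF.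
Qed.

Lemma omega_rcons M k m s x : inP M (x + m) m s ->
  omega k m (rcons s x) = ((x + 1 - k) * omega (x + m) m s)%N.
Proof.
rewrite inPE; case: s => [|y t].
  by rewrite /omega /= big_ord0 !muln1.
case/andP=> _ /andP[_ hl].
rewrite rcons_cons !omegaE last_rcons gp_rcons.
congr muln; rewrite mulnC; congr muln.
move: hl; set a := last y t; move=> hl; lia.
Qed.

Definition Gd M k m n s : int :=
  if inP M k m s && (psize s == n) then (omega k m s)%:R else 0.
Definition Cc M k m n := tsum M n.+1 (Gd M k m n).

Lemma Pcoef_C M k m n : Pcoef M k m n = Cc M k m n.
Proof. by rewrite /Pcoef /Cc big_mkcond -sum_ffun_tsum. Qed.

Lemma Gd_rcons M k m n s x : Gd M.+1 k m n (rcons s x) =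
  if (k <= x)%N && (x <= n)%N then (x + 1 - k)%N%:R * Gd M (x + m)%N m (n - x)%N s else 0.
Proof.
rewrite /Gd inP_rcons psize_rcons.
case hk: (k <= x)%N => //=.
case hi: (inP M (x + m) m s) => /=; last by case: ifP; rewrite ?mulr0.
rewrite (omega_rcons _ hi) natrM.
case hx: (x <= n)%N.
  have -> : (psize s + x == n)%N = (psize s == n - x)%N by apply/eqP/eqP; lia.
  by case: ifP; rewrite ?mulr0.
have -> : (psize s + x == n)%N = false by apply/eqP; lia.
by [].
Qed.

Lemma Cc_rec M k m n : Cc M.+1 k m n =
  \sum_(x < n.+1) (if (k <= x)%N then (x + 1 - k)%N%:R else 0) * Cc M (x + m)%N m (n - x)%N.
Proof.
rewrite /Cc /=.
rewrite (@tsum_ext M n.+1 _ (fun s => \sum_(x < n.+1)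
   (if (k <= x)%N then (x + 1 - k)%N%:R else 0) * Gd M (x + m)%N m (n - x)%N s)); last first.
  move=> s; apply: eq_bigr => x _; have hx : (x <= n)%N := ltn_ord x.
  rewrite Gd_rcons hx andbT.
  by case: ifP; rewrite ?mul0r.
rewrite (tsum_sum M n.+1 n.+1 (fun x s => (if (k <= x)%N then (x + 1 - k)%N%:R else 0) * Gd M (x + m)%N m (n - x)%N s)).
apply: eq_bigr => x _; rewrite tsum_scale; congr (_ * _).
apply: (@tsum_bound M n.+1 (n - x).+1 (n - x)%N); [lia | lia |].
move=> s hs; rewrite /Gd; case: ifP => //; case/andP=> _ /eqP h; lia.
Qed.
Lemma Tlemma (R : comNzRingType) (y : R) k t :
 (\sum_(x < k + t) (if (k <= x)%N then (x + 1 - k)%N%:R else 0) * y ^+ x) * (1 - y) ^+ 2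
 = y ^+ k - (t.+1)%:R * y ^+ (k + t) + t%:R * y ^+ (k + t).+1.
Proof.
elim: t => [|t IH].
  rewrite addn0 big1 ?mul0r; last first. move=> x _; rewrite leqNgt ltn_ord /=; apply: mul0r.
  by rewrite addr0 (_ : 1%:R = 1) // mul1r subrr.
rewrite addnS big_ord_recr /= mulrDl IH leq_addr.
have -> : (k + t + 1 - k = t.+1)%N by lia.
rewrite !exprSr -!natr1.
set u := y ^+ (k + t); set a : R := t%:R.
ring.
Qed.

Definition eqN N (p q : {poly int}) := forall i, (i < N)%N -> p`_i = q`_i.

Lemma eqN_mulr N p p' r : eqN N p p' -> eqN N (p * r) (p' * r).
Proof.
move=> h i hi; rewrite !coefM; apply: eq_bigr => j _; rewrite h //.
have := ltn_ord j; lia.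
Qed.

Lemma eqN_sum N K (F G : 'I_K -> {poly int}) :
  (forall x, eqN N (F x) (G x)) -> eqN N (\sum_(x < K) F x) (\sum_(x < K) G x).
Proof. move=> h i hi; rewrite !coef_sum; apply: eq_bigr => x _; exact: h. Qed.

Lemma eqN_scale N c p q : eqN N p q -> eqN N (c *: p) (c *: q).
Proof. by move=> h i hi; rewrite !coefZ h. Qed.

Lemma eqN_XnM N d p q : eqN N p q -> eqN N ('X^d * p) ('X^d * q).
Proof. move=> h i hi; rewrite !coefXnM; case: ifP => // _; apply: h; lia. Qed.

Lemma eqN_trans N p q r : eqN N p q -> eqN N q r -> eqN N p r.
Proof. move=> h1 h2 i hi; rewrite h1 // h2 //. Qed.

Lemma coef_Pgen M k m N i : (i < N)%N -> (Pgen_trunc M k m N)`_i = Cc M k m i.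
Proof.
move=> hi; rewrite /Pgen_trunc coef_sum (bigD1 (Ordinal hi)) //= coefZ coefXn eqxx mulr1.
rewrite big1 ?addr0 ?Pcoef_C // => j hj; rewrite coefZ coefXn.
have -> : (i == j) = false.
  apply/negbTE; apply: contra hj => /eqP h; apply/eqP/val_inj => /=; by rewrite h.
by rewrite mulr0.
Qed.

Definition cf k x : int := if (k <= x)%N then (x + 1 - k)%N%:R else 0.

Lemma Pgen_rec M k m N : eqN N (Pgen_trunc M.+1 k m N)
  (\sum_(x < N) cf k x *: ('X^x * Pgen_trunc M (x + m)%N m N)).
Proof.
move=> i hi; rewrite coef_Pgen // Cc_rec coef_sum.
rewrite (@sum_trunc N i (fun x => (cf k x *: ('X^x * Pgen_trunc M (x + m)%N m N))`_i)) //; last first.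
  by move=> x hx; rewrite coefZ coefXnM hx mulr0.
apply: eq_bigr => x _; rewrite coefZ coefXnM.
have hx : (i < x)%N = false by apply/negbTE; rewrite -leqNgt -ltnS ltn_ord.
by rewrite hx coef_Pgen //; lia.
Qed.
Lemma binS2 M : 'C(M.+1, 2) = ('C(M, 2) + M)%N.
Proof. by rewrite binS bin1. Qed.

Lemma final m M k N : eqN N ('X^(m * 'C(M, 2) + m * M) *
   (\sum_(x < N) (if (k <= x)%N then (x + 1 - k)%N%:R else 0) * ('X^(M.+1) : {poly int}) ^+ x) * (1 - 'X^(M.+1)) ^+ 2)
  'X^(m * 'C(M.+1, 2) + k * M.+1).
Proof.
move=> i hi; rewrite binS2; set c := 'C(M, 2).
have hk : (k <= k * M.+1)%N by rewrite leq_pmulr.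
case: (leqP N k) => hNk.
  rewrite big1 ?mulr0 ?mul0r ?coef0 ?coefXn; last first.
    by move=> x _; rewrite leqNgt (leq_trans (ltn_ord x) hNk) /= mul0r.
  have -> : (i == m * (c + M) + k * M.+1)%N = false by apply/eqP; lia.
  by [].
have [t ht] : exists t, N = (k + t)%N by exists (N - k)%N; lia.
subst N.
rewrite -mulrA Tlemma mulrDr mulrBr coefD coefB.
rewrite -exprM -exprD.
have z : forall (a j : nat), (k + t <= j)%N ->
    ('X^(m * c + m * M) * (a%:R * ('X^(M.+1) : {poly int}) ^+ j))`_i = 0.
  move=> a j hj; rewrite mulrCA mulr_natl -exprM -exprD coefMn coefXn.
  have -> : (i == m * c + m * M + M.+1 * j)%N = false by apply/eqP; nia.
  by rewrite mul0rn.
rewrite !z ?subr0 ?addr0 //.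
by have -> : (m * (c + M) + k * M.+1 = m * c + m * M + M.+1 * k)%N by nia.
Qed.

Lemma mainP m N M : forall k,
  eqN N (Pgen_trunc M k m N * qpoch M ^+ 2) 'X^(m * 'C(M, 2) + k * M).
Proof.
elim: M => [|M IH] k.
  rewrite /qpoch big_ord0 expr1n mulr1 => i hi.
  rewrite coef_Pgen // /Cc /= /Gd inPE /= !muln0 coefXn /omega.
  by case: i {hi}.
have qS : qpoch M.+1 ^+ 2 = qpoch M ^+ 2 * (1 - 'X^(M.+1)) ^+ 2.
  by rewrite /qpoch big_ord_recr /= exprMn.
rewrite qS.
apply: eqN_trans; first by apply: eqN_mulr; exact: Pgen_rec.
rewrite mulrA.
apply: eqN_trans.
  apply: eqN_mulr.
  rewrite mulr_suml.
  apply: eqN_sum => x.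
  rewrite -scalerAl -mulrA.
  apply: eqN_scale; apply: eqN_XnM; exact: IH.
set S := \sum_(x < N) _.
have -> : S = 'X^(m * 'C(M, 2) + m * M) *
   (\sum_(x < N) (if (k <= x)%N then (x + 1 - k)%N%:R else 0) * ('X^(M.+1) : {poly int}) ^+ x).
  rewrite /S mulr_sumr; apply: eq_bigr => x _; rewrite /cf.
  case: ifP => _; last by rewrite scale0r mul0r mulr0.
  rewrite scaler_nat mulr_natl mulrnAr; congr (_ *+ _).
  rewrite -!exprD -exprM -exprD; congr ('X^_); nia.
exact: final.
Qed.

Unset Implicit Arguments.
Theorem theorem5 (M k m : nat) (hk : (1 <= k)%N) (N n : nat) (hn : (n < N)%N) :
  (Pgen_trunc M k m N * qpoch M ^+ 2)`_n
  = ('X^(m * 'C(M, 2) + k * M) : {poly int})`_n.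
Proof. exact: mainP. Qed.
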